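(* Let $p$ be a prime and let $\widetilde{\mathcal{C}}$ be an $[n+k,n+k-m]$ linear code over $\mathbb{F}_p$ with parity check matrix $\widetilde{H}\in\mathbb{F}_p^{m\times(n+k)}$ (so $\widetilde{\mathcal{C}}^\perp$ is the row space of $\widetilde{H}$) of the form $$\widetilde{H} = \begin{pmatrix} -\mathbb{1}_k & \operatorname{H}_1\\ 0 & \operatorname{H}_0\end{pmatrix},$$ where $\mathbb{1}_k$ is the $k\times k$ identity and $\operatorname{H}_1\in\mathbb{F}_p^{k\times n}$, $\operatorname{H}_0\in\mathbb{F}_p^{(m-k)\times n}$. Suppose $\widetilde{\mathcal{C}}^\perp$ is triply-even and contains the all-ones vector. Then the matrix $\operatorname{H} = \begin{pmatrix}\operatorname{H}_1\\ \operatorname{H}_0\end{pmatrix}$, with rows $h^1,\dots,h^m$ (the first $k$ being the rows of $\operatorname{H}_1$), is tri-orthogonal. Furthermore, for all $1\le a\le k$, $\epsilon_a := \sum_i (h^a_i)^3 = 1\pmod p$ and $\sum_i (h^a_i)^2 = -1\pmod p$.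
   Context: A subspace $\mathcal{V}\subseteq\mathbb{F}_p^N$ is triply-even if $\sum_i u_iv_iw_i = 0\pmod p$ for all $u,v,w\in\mathcal{V}$. A matrix with rows $h^1,\dots,h^m\in\mathbb{F}_p^n$ is tri-orthogonal if $\sum_i h^a_ih^b_i = 0\pmod p$ for all $1\le a<b\le m$ and $\sum_i h^a_ih^b_ih^c_i = 0\pmod p$ for all $1\le a<b<c\le m$. *)

(* Defs.v *)
From HB Require Import structures.
From mathcomp Require Import all_boot all_order all_algebra.
Set Implicit Arguments. Unset Strict Implicit. Unset Printing Implicit Defensive.
Import GRing.Theory.
Local Open Scope ring_scope.

(* A subspace of F^N is represented as the row space of a matrix V. *)
Definition triply_even (F : fieldType) (r N : nat) (V : 'M[F]_(r, N)) : Prop :=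
  forall u v w : 'rV[F]_N, (u <= V)%MS -> (v <= V)%MS -> (w <= V)%MS ->
    \sum_(i < N) u 0 i * v 0 i * w 0 i = 0.

Definition tri_orthogonal (F : fieldType) (m n : nat) (H : 'M[F]_(m, n)) : Prop :=
  (forall a b : 'I_m, (a < b)%N -> \sum_(i < n) H a i * H b i = 0) /\
  (forall a b c : 'I_m, (a < b)%N -> (b < c)%N ->
     \sum_(i < n) H a i * H b i * H c i = 0).

Definition Htilde (F : fieldType) (k l n : nat)
  (H1 : 'M[F]_(k, n)) (H0 : 'M[F]_(l, n)) : 'M[F]_(k + l, k + n) :=
  block_mx (- 1%:M) H1 0 H0.

(* Main.v *)
Require Import Defs.
From HB Require Import structures.
From mathcomp Require Import all_boot all_order all_algebra.
From mathcomp Require Import ring.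
Import GRing.Theory.
Local Open Scope ring_scope.

Section Aux.
Variables (F : fieldType) (k l n : nat) (H1 : 'M[F]_(k, n)) (H0 : 'M[F]_(l, n)).

Lemma Tl (r : 'I_(k + l)) (j : 'I_k) :
  Htilde H1 H0 r (lshift n j) = - ((r : nat) == j)%:R.
Proof.
rewrite /Htilde -(splitK r); case: (split r) => r' /=.
  by rewrite block_mxEul !mxE.
rewrite block_mxEdl mxE; have := ltn_ord j.
case: eqP => [/= e|]; last by rewrite oppr0.
by rewrite -e ltnNge leq_addr.
Qed.

Lemma Tr (r : 'I_(k + l)) (i : 'I_n) :
  Htilde H1 H0 r (rshift k i) = col_mx H1 H0 r i.
Proof.
rewrite /Htilde -(splitK r); case: (split r) => r' /=.
  by rewrite block_mxEur col_mxEu.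
by rewrite block_mxEdr col_mxEd.
Qed.

Lemma sum3 (r1 r2 r3 : 'I_(k + l)) :
  \sum_(i < k + n) Htilde H1 H0 r1 i * Htilde H1 H0 r2 i * Htilde H1 H0 r3 i =
  - \sum_(j < k) ((r1 == j :> nat) && (r2 == j :> nat) && (r3 == j :> nat))%:R
  + \sum_(i < n) col_mx H1 H0 r1 i * col_mx H1 H0 r2 i * col_mx H1 H0 r3 i.
Proof.
rewrite big_split_ord /=; congr (_ + _).
  rewrite -sumrN; apply: eq_bigr => j _; rewrite !Tl.
  by case: (_ == _); case: (_ == _); case: (_ == _); rewrite /=; ring.
by apply: eq_bigr => i _; rewrite !Tr.
Qed.

Lemma sum2 (r1 r2 : 'I_(k + l)) :
  \sum_(i < k + n) (const_mx 1 : 'rV[F]_(k + n)) 0 i * Htilde H1 H0 r1 i * Htilde H1 H0 r2 i =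
  \sum_(j < k) ((r1 == j :> nat) && (r2 == j :> nat))%:R
  + \sum_(i < n) col_mx H1 H0 r1 i * col_mx H1 H0 r2 i.
Proof.
rewrite big_split_ord /=; congr (_ + _).
  apply: eq_bigr => j _; rewrite !Tl mxE.
  by case: (_ == _); case: (_ == _); rewrite /=; ring.
by apply: eq_bigr => i _; rewrite !Tr mxE mul1r.
Qed.

End Aux.

Theorem lemma4 (p k l n : nat) (pr_p : prime p)
  (H1 : 'M['F_p]_(k, n)) (H0 : 'M['F_p]_(l, n)) :
  row_free (Htilde H1 H0) ->
  triply_even (Htilde H1 H0) ->
  ((const_mx 1 : 'rV['F_p]_(k + n)) <= Htilde H1 H0)%MS ->
  tri_orthogonal (col_mx H1 H0) /\
  (forall a : 'I_k,
     \sum_(i < n) H1 a i ^+ 3 = 1 /\ \sum_(i < n) H1 a i ^+ 2 = -1).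
Proof.
move=> _ hT h1.
set T := Htilde H1 H0.
have E3 (r1 r2 r3 : 'I_(k + l)) := hT _ _ _ (row_sub r1 T) (row_sub r2 T) (row_sub r3 T).
have E2 (r1 r2 : 'I_(k + l)) := hT _ _ _ h1 (row_sub r1 T) (row_sub r2 T).
have ne2 (a b : 'I_(k + l)) (j : 'I_k) : (a < b)%N ->
    ((a == j :> nat) && (b == j :> nat)) = false.
  move=> ab; apply/negbTE/negP => /andP[/eqP ea /eqP eb].
  by move: ab; rewrite ea eb ltnn.
have rowe (r : 'I_(k + l)) i : row r T 0 i = T r i by rewrite mxE.
split; first split.
- move=> a b ab; have := E2 a b.
  under eq_bigr do rewrite !rowe.
  rewrite sum2 big1 ?add0r // => j _.
  by rewrite ne2.
- move=> a b c ab bc; have := E3 a b c.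
  under eq_bigr do rewrite !rowe.
  rewrite sum3 big1 ?oppr0 ?add0r // => j _.
  by rewrite ne2.
move=> a.
have S1 : \sum_(j < k) ((lshift l a == j :> nat))%:R = 1 :> 'F_p.
  rewrite (bigD1 a) //= eqxx big1 ?addr0 // => j /negbTE.
  by rewrite eq_sym => /negbT/eqP ne; case: eqP => // /val_inj.
split.
- have := E3 (lshift l a) (lshift l a) (lshift l a).
  under eq_bigr do rewrite !rowe.
  rewrite sum3.
  under eq_bigr do rewrite !andbb.
  rewrite S1.
  under [X in - 1 + X]eq_bigr do rewrite col_mxEu -mulrA -expr2 -exprS.
  by move/eqP; rewrite addrC subr_eq0 => /eqP.
- have := E2 (lshift l a) (lshift l a).
  under eq_bigr do rewrite !rowe.
  rewrite sum2.
  under eq_bigr do rewrite !andbb.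
  rewrite S1.
  under [X in 1 + X]eq_bigr do rewrite col_mxEu -expr2.
  by move/eqP; rewrite addrC addr_eq0 => /eqP.
Qed.
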